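(* Let $d\geq 2$ and $0<a<b\leq d$ be integers, and let $\ell_d^{(a,b)}(\alpha,\lambda,n)$ be the number of partitions with perimeter $n$, largest part $\alpha$, exactly $\lambda$ parts, and all parts congruent to $a$ or $b$ modulo $d$. Then, as formal power series, $$\sum_{\alpha,\lambda,n\geq1}\ell_d^{(a,b)}(\alpha,\lambda,n)x^\alpha y^\lambda q^n=\frac{y\,(x^aq^a-x^ayq^{a+1}+x^bq^b)}{1-2yq+y^2q^2-x^dq^d},$$ and in particular $$\sum_{n\geq 1}\ell_d^{(a,b)}(n)q^n=\frac{q^a-q^{a+1}+q^b}{1-2q+q^2-q^d}.$$
   Context: A partition is a finite nonincreasing sequence of positive integers (its parts); its size is not fixed. The perimeter of a partition with largest part $\alpha$ and $\lambda$ parts is $\alpha+\lambda-1$. For $0<a<b\le d$, $\ell_d^{(a,b)}(n)$ is the number of partitions of perimeter $n$ all of whose parts are congruent to $a$ or $b$ modulo $d$. *)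

(* Defs.v *)
From mathcomp Require Import all_boot all_order all_algebra.
Set Implicit Arguments. Unset Strict Implicit. Unset Printing Implicit Defensive.
Import GRing.Theory Num.Theory.

Definition is_partition (s : seq nat) : bool :=
  all (fun p => 0 < p) s && sorted geq s.

Definition largest_part (s : seq nat) : nat := head 0 s.
Definition num_parts (s : seq nat) : nat := size s.
Definition perimeter (s : seq nat) : nat := largest_part s + num_parts s - 1.

Definition parts_ab (d a b : nat) (s : seq nat) : bool :=
  all (fun p => (p == a %[mod d]) || (p == b %[mod d])) s.

(* Such partitions
   are sequences of length lambda with entries <= alpha, hence are enumerated
   by lambda-tuples over 'I_(alpha.+1). *)
Definition ell3 (d a b alpha lam n : nat) : nat :=
  #|[set t : lam.-tuple 'I_alpha.+1 |
       let s := map val t in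
       [&& is_partition s, largest_part s == alpha, perimeter s == n
         & parts_ab d a b s]]|.

(* A partition of perimeter n has at most n parts (for n >= 1) and all parts
   at most n, so it is a lambda-tuple over 'I_(n.+1) for some lambda <= n. *)
Definition ell (d a b n : nat) : nat :=
  \sum_(lam < n.+1)
    #|[set t : lam.-tuple 'I_n.+1 |
         let s := map val t in
         [&& is_partition s, perimeter s == n & parts_ab d a b s]]|.

(* Trivariate series in x, y, q: coefficient of x^i y^j q^k. *)
Definition ps3 := nat -> nat -> nat -> int.

Definition mul3 (f g : ps3) : ps3 := fun i j k =>
  (\sum_(i1 < i.+1) \sum_(j1 < j.+1) \sum_(k1 < k.+1)
     f i1 j1 k1 * g (i - i1)%N (j - j1)%N (k - k1)%N)%R.

Definition add3 (f g : ps3) : ps3 := fun i j k => (f i j k + g i j k)%R.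

Definition mono3 (c : int) (e1 e2 e3 : nat) : ps3 := fun i j k =>
  if [&& i == e1, j == e2 & k == e3] then c else 0%R.

Definition ps1 := nat -> int.
Definition mul1 (f g : ps1) : ps1 := fun n =>
  (\sum_(k < n.+1) f k * g (n - k)%N)%R.
Definition add1 (f g : ps1) : ps1 := fun n => (f n + g n)%R.
Definition mono1 (c : int) (e : nat) : ps1 := fun n => if n == e then c else 0%R.

Definition gen3 (d a b : nat) : ps3 := fun i j k =>
  if [&& 0 < i, 0 < j & 0 < k] then ((ell3 d a b i j k)%:Z)%R else 0%R.

Definition den3 (d : nat) : ps3 :=
  add3 (mono3 1 0 0 0) (add3 (mono3 (-2) 0 1 1)
    (add3 (mono3 1 0 2 2) (mono3 (-1) d 0 d))).

Definition num3 (a b : nat) : ps3 :=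
  add3 (mono3 1 a 1 a) (add3 (mono3 (-1) a 2 a.+1) (mono3 1 b 1 b)).

Definition gen1 (d a b : nat) : ps1 := fun n =>
  if 0 < n then ((ell d a b n)%:Z)%R else 0%R.

Definition den1 (d : nat) : ps1 :=
  add1 (mono1 1 0) (add1 (mono1 (-2) 1) (add1 (mono1 1 2) (mono1 (-1) d))).

Definition num1 (a b : nat) : ps1 :=
  add1 (mono1 1 a) (add1 (mono1 (-1) a.+1) (mono1 1 b)).

(* Main.v *)
Require Import Defs.
From mathcomp Require Import all_boot all_order all_algebra.
From mathcomp Require Import zify.
From Stdlib Require Import FunctionalExtensionality.
Set Implicit Arguments. Unset Strict Implicit. Unset Printing Implicit Defensive.

Definition inS (d a b p : nat) : bool := (p == a %[mod d]) || (p == b %[mod d]).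

Fixpoint Rp d a b (m : nat) (s : seq nat) : bool :=
  if s is x :: s' then [&& 0 < x, x <= m, inS d a b x & Rp d a b x s'] else true.

Fixpoint A d a b (m l : nat) : nat :=
  if l is l'.+1 then \sum_(p < m.+1 | (0 < p) && inS d a b p) A d a b p l' else 1.

Definition cntT M l (Q : seq nat -> bool) : nat :=
  \sum_(t : l.-tuple 'I_M.+1) (Q (map val t) : nat).

Lemma path_geq x s : path geq x s = (head 0 s <= x) && sorted geq s.
Proof. by case: s. Qed.

Lemma Rp_iff d a b m s :
  Rp d a b m s = [&& is_partition s, parts_ab d a b s & head 0 s <= m].
Proof.
elim: s m => [|x s IH] m //=.
rewrite IH /is_partition /parts_ab /= path_geq /inS.
by case: (0 < x); case: (x <= m); case: (_ || _); case: (all _ s);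
   case: (sorted _ s); case: (all _ s); case: (head 0 s <= x).
Qed.

Lemma cntT_cons M l Q :
  cntT M l.+1 Q = \sum_(x < M.+1) cntT M l (fun s => Q (val x :: s)).
Proof.
rewrite /cntT pair_big /=.
rewrite (reindex (fun p : 'I_M.+1 * l.-tuple 'I_M.+1 => [tuple of p.1 :: p.2])) /=.
  by apply: eq_bigr.
exists (fun t : l.+1.-tuple 'I_M.+1 => (thead t, [tuple of behead t])).
  move=> [x t] _ /=; rewrite theadE; congr pair; exact: val_inj.
move=> t _ /=; by rewrite [RHS]tuple_eta.
Qed.

Lemma cntT_andl M l (c : bool) Q :
  cntT M l (fun s => c && Q s) = if c then cntT M l Q else 0.
Proof. by case: c => //; rewrite /cntT big1. Qed.

Lemma eq_cntT M l Q1 Q2 : Q1 =1 Q2 -> cntT M l Q1 = cntT M l Q2.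
Proof. by move=> e; apply: eq_bigr => t _; rewrite e. Qed.

Lemma cntT_Rp d a b M l m : m <= M -> cntT M l (Rp d a b m) = A d a b m l.
Proof.
elim: l m => [|l IH] m hm.
  rewrite /cntT /= (eq_bigr (fun _ => 1)); last first.
    by move=> t _; rewrite (size0nil (size_tuple (map_tuple val t))).
  by rewrite sum_nat_const card_tuple.
rewrite cntT_cons /=.
rewrite (eq_bigr (fun x : 'I_M.+1 => if [&& 0 < val x, val x <= m & inS d a b x]
             then A d a b x l else 0)); last first.
  move=> x _; rewrite (eq_cntT _ _ (Q2 := fun s => [&& 0 < val x, val x <= m & inS d a b x] && Rp d a b x s)); last first.
    by move=> s /=; rewrite !andbA.
  rewrite cntT_andl; case: ifP => // /and3P [_ hx _]; apply: IH.
  exact: leq_trans hx hm.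
rewrite -big_mkcond /= (big_ord_widen_cond M.+1 (fun p => (0 < p) && inS d a b p) (fun p => A d a b p l)) 1?ltnS //.
apply: eq_bigl => x; rewrite ltnS.
by case: (0 < x); case: (x <= m); case: (inS _ _ _ _).
Qed.

Fixpoint Nc d a b (m : nat) : nat :=
  if m is m'.+1 then Nc d a b m' + inS d a b m'.+1 else 0.

Lemma A_binom d a b m l : A d a b m l = 'C(Nc d a b m + l - 1, l).
Proof.
elim: m l => [|m IHm] l.
  case: l => [|l] //=; rewrite big_mkcond big_ord_recr big_ord0 /= bin_small //; lia.
elim: l => [|l IHl]; first by rewrite bin0.
rewrite /= big_mkcond big_ord_recr /= -big_mkcond.
have -> : \sum_(i < m.+1 | (0 < i) && inS d a b i) A d a b i l = A d a b m l.+1 by [].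
rewrite IHm; move: IHl; rewrite /= => IHl; rewrite IHl.
case: (inS d a b m.+1) => /=.
  set N := Nc d a b m.
  have -> : N + l.+1 - 1 = N + l by lia.
  have -> : N + 1 + l - 1 = N + l by lia.
  have -> : N + 1 + l.+1 - 1 = (N + l).+1 by lia.
  by rewrite binS.
by rewrite addn0 addn0.
Qed.

Definition g d a b (i j : nat) : nat :=
  if [&& 0 < i, 0 < j & inS d a b i] then A d a b i j.-1 else 0.

Lemma g0l d a b j : g d a b 0 j = 0. Proof. by []. Qed.
Lemma g0r d a b i : g d a b i 0 = 0. Proof. by rewrite /g andbF. Qed.

Lemma cnt_head d a b M l (P : nat -> bool) :
  \sum_(t : l.+1.-tuple 'I_M.+1)
     ([&& is_partition (map val t), P (head 0 (map val t)) & parts_ab d a b (map val t)] : nat)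
  = \sum_(x < M.+1 | P x) g d a b x l.+1.
Proof.
have -> : \sum_(t : l.+1.-tuple 'I_M.+1)
     ([&& is_partition (map val t), P (head 0 (map val t)) & parts_ab d a b (map val t)] : nat)
   = cntT M l.+1 (fun s => [&& is_partition s, P (head 0 s) & parts_ab d a b s]) by [].
rewrite cntT_cons [RHS]big_mkcond; apply: eq_bigr => x _.
rewrite (eq_cntT _ _ (Q2 := fun s => [&& P x, 0 < val x & inS d a b x] && Rp d a b x s)).
  rewrite cntT_andl cntT_Rp ?(leq_ord x) // /g.
  by case: (P x); case: (0 < val x); case: (inS _ _ _ _).
move=> s; cbv beta.
have H := Rp_iff d a b x (val x :: s).
rewrite [Rp _ _ _ _ (_ :: _)]/= leqnn /= andbT in H.
move: H; rewrite /= /inS.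
case: (is_partition (val x :: s)); case: (parts_ab d a b s); case: (P (val x)); case: (0 < val x);
  case: ((val x == a %[mod d]) || (val x == b %[mod d])); case: (Rp d a b x s) => //.
Qed.

Lemma card_sum (T : finType) (P : pred T) : #|[set t | P t]| = \sum_t (P t : nat).
Proof. by rewrite -sum1_card big_mkcond; apply: eq_bigr => t _; rewrite inE; case: (P t). Qed.

Lemma ell3_g d a b i l k : 0 < i ->
  ell3 d a b i l.+1 k = if k.+1 == i + l.+1 then g d a b i l.+1 else 0.
Proof.
move=> hi; rewrite /ell3 card_sum.
rewrite (eq_bigr (fun t : l.+1.-tuple 'I_i.+1 =>
   ([&& is_partition (map val t), ((head 0 (map val t) == i) && (i + l == k))
      & parts_ab d a b (map val t)] : nat))); last first.
  move=> t _ /=; rewrite /perimeter /largest_part /num_parts size_map size_tuple.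
  rewrite addnS subn1 /=.
  by case: eqP => [->|]; rewrite ?andbF //= andbF.
rewrite (cnt_head d a b i l (fun x => (x == i) && (i + l == k))) big_mkcond /=.
rewrite (eq_bigr (fun x : 'I_i.+1 => if val x == i then (if i + l == k then g d a b i l.+1 else 0) else 0)); last first.
  by move=> x _; case: eqP => [->|] //.
rewrite -big_mkcond (big_ord1_eq _ (fun _ => if i + l == k then g d a b i l.+1 else 0) i i.+1) ltnSn addnS eqSS eq_sym.
by case: (_ == _).
Qed.

Lemma ell_term d a b n l : 0 < n -> l <= n ->
  #|[set t : l.+1.-tuple 'I_n.+1 | let s := map val t in
     [&& is_partition s, perimeter s == n & parts_ab d a b s]]| = g d a b (n - l) l.+1.
Proof.
move=> hn hl; rewrite card_sum.
rewrite (eq_bigr (fun t : l.+1.-tuple 'I_n.+1 =>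
   ([&& is_partition (map val t), (head 0 (map val t) == n - l)
      & parts_ab d a b (map val t)] : nat))); last first.
  move=> t _ /=; rewrite /perimeter /largest_part /num_parts size_map size_tuple.
  rewrite addnS subn1 /=.
  have -> : (head 0 [seq val i | i <- t] + l == n) = (head 0 [seq val i | i <- t] == n - l).
    by apply/eqP/eqP; lia.
  by [].
rewrite (cnt_head d a b n l (fun x => x == n - l)) (big_ord1_eq _ (fun x => g d a b x l.+1) (n - l) n.+1).
have -> : n - l < n.+1 by lia.
by [].
Qed.

Lemma ell_sum d a b n : 0 < n ->
  ell d a b n = \sum_(l < n) g d a b (n - l) l.+1.
Proof.
move=> hn; rewrite /ell big_ord_recl /=.
rewrite card_sum big1; last first.
  move=> t _; rewrite (size0nil (size_tuple (map_tuple val t))) /perimeter /largest_part /num_parts.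
  have h0 : (head 0 [::] + size (@nil nat) - 1 == n) = false by apply/eqP => /=; lia.
  by rewrite h0 andbF.
rewrite add0n; apply: eq_bigr => l _.
exact: (ell_term d a b hn (ltnW (ltn_ord l))).
Qed.


Lemma inS_shift d a b p : inS d a b (p + d) = inS d a b p.
Proof. by rewrite /inS modnDr. Qed.

Lemma inS_small d a b p : 0 < a -> a < b -> b <= d -> 0 < p -> p <= d ->
  inS d a b p = (p == a) || (p == b).
Proof.
move=> ha hab hbd hp hpd; rewrite /inS.
have hA : a %% d = a by rewrite modn_small //; lia.
rewrite hA.
have [hpl|hpe] : p < d \/ p = d by lia.
  rewrite (modn_small hpl).
  have [hbl|hbe] : b < d \/ b = d by lia.
    by rewrite (modn_small hbl).
  subst b; rewrite modnn.
  have -> : (p == 0) = false by lia.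
  have -> : (p == d) = false by lia.
  by [].
subst p; rewrite modnn.
have -> : (0 == a) = false by lia.
have -> : (d == a) = false by lia.
have [hbl|hbe] : b < d \/ b = d by lia.
  rewrite (modn_small hbl).
  have -> : (0 == b) = false by lia.
  have -> : (d == b) = false by lia.
  by [].
by subst b; rewrite modnn !eqxx.
Qed.

Lemma inSa d a b : inS d a b a. Proof. by rewrite /inS eqxx. Qed.
Lemma inSb d a b : inS d a b b. Proof. by rewrite /inS eqxx orbT. Qed.

Lemma Nc_small d a b m : 0 < a -> a < b -> b <= d -> m <= d ->
  Nc d a b m = (a <= m) + (b <= m).
Proof.
move=> ha hab hbd; elim: m => [|m IH] hm /=; first by lia.
rewrite IH; last by lia.
rewrite inS_small //; lia.
Qed.

Lemma Nc_shift d a b m : 0 < a -> a < b -> b <= d ->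
  Nc d a b (m + d) = Nc d a b m + 2.
Proof.
move=> ha hab hbd; elim: m => [|m IH].
  rewrite add0n Nc_small //= ; lia.
by rewrite addSn /= IH -addSn inS_shift; lia.
Qed.

Lemma Nc_pos d a b p : 0 < p -> inS d a b p -> 0 < Nc d a b p.
Proof. by case: p => // p _ /= ->; rewrite addn1. Qed.

Lemma gval d a b i J : 0 < i -> inS d a b i ->
  g d a b i J.+1 = 'C(Nc d a b i + J - 1, J).
Proof. by move=> hi hS; rewrite /g hi hS A_binom. Qed.

Lemma gnot d a b i j : inS d a b i = false -> g d a b i j = 0.
Proof. by move=> h; rewrite /g h !andbF. Qed.

Lemma biv d a b i j : 2 <= d -> 0 < a -> a < b -> b <= d ->
  g d a b i j + g d a b i (j - 2) + ((i == a) && (j == 2))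
  = 2 * g d a b i (j - 1) + g d a b (i - d) j + ((i == a) && (j == 1))
    + ((i == b) && (j == 1)).
Proof.
move=> hd ha hab hbd.
case: i => [|i].
  rewrite sub0n !g0l; lia.
case: j => [|J].
  rewrite !g0r; lia.
set i1 := i.+1.
have hi : 0 < i1 by [].
case hS: (inS d a b i1); last first.
  rewrite !(@gnot d a b i1 _ hS).
  have -> : g d a b (i1 - d) J.+1 = 0.
    have [hl|hg] : i1 <= d \/ d < i1 by lia.
      by have -> : i1 - d = 0 by lia.
    apply: gnot; rewrite -hS.
    have {2}-> : i1 = (i1 - d) + d by lia.
    by rewrite inS_shift.
  have : i1 != a by apply/negP => /eqP e; rewrite e inSa in hS.
  have : i1 != b by apply/negP => /eqP e; rewrite e inSb in hS.
  lia.
have [hl|hg] : i1 <= d \/ d < i1 by lia.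
  have -> : i1 - d = 0 by lia.
  rewrite g0l.
  have := inS_small ha hab hbd hi hl; rewrite hS => /esym/orP [/eqP ea|/eqP eb].
    rewrite ea.
    have hN : Nc d a b a = 1 by rewrite Nc_small //; lia.
    have G : forall j, g d a b a j = (0 < j).
      case=> [|j]; first by rewrite g0r.
      rewrite gval ?inSa // hN.
      have -> : 1 + j - 1 = j by lia.
      by rewrite binn.
    rewrite !G; lia.
  rewrite eb.
  have hb0 : 0 < b by lia.
  have hN : Nc d a b b = 2 by rewrite Nc_small //; lia.
  have G : forall j, g d a b b j = j.
    case=> [|j]; first by rewrite g0r.
    rewrite gval ?inSb // hN.
    have -> : 2 + j - 1 = j.+1 by lia.
    by rewrite binSn.
  rewrite !G; lia.
set p := i1 - d.
have hp : 0 < p by lia.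
have hip : i1 = p + d by lia.
have hSp : inS d a b p by rewrite -inS_shift -hip.
have hNp : Nc d a b i1 = Nc d a b p + 2 by rewrite hip Nc_shift.
have hNpos := Nc_pos hp hSp.
have hia : (i1 == a) = false by lia.
have hib : (i1 == b) = false by lia.
rewrite hia hib gval // hNp gval //.
set m := Nc d a b p in hNpos *.
case: J => [|[|K]].
  rewrite /= !g0r !bin0; lia.
  rewrite /= g0r gval // hNp bin0 !bin1; lia.
rewrite !subSS !subn0 !gval // hNp -/m.
have -> : m + 2 + K.+2 - 1 = (m + K + 1).+2 by lia.
have -> : m + 2 + K.+1 - 1 = (m + K + 1).+1 by lia.
have -> : m + 2 + K - 1 = m + K + 1 by lia.
have -> : m + K.+2 - 1 = m + K + 1 by lia.
rewrite binS (binS (m + K + 1) K.+1) (binS (m + K + 1) K).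
rewrite !andFb; lia.
Qed.

Import GRing.Theory.
Local Open Scope ring_scope.

Lemma sum_if_int n e (F : nat -> int) :
  \sum_(i < n) (if (i : nat) == e then F i else 0) = if (e < n)%N then F e else 0.
Proof. by rewrite -big_mkcond big_ord1_eq. Qed.

Lemma mul3_addl f1 f2 h i j k :
  mul3 (add3 f1 f2) h i j k = mul3 f1 h i j k + mul3 f2 h i j k.
Proof.
rewrite /mul3 /add3 -big_split; apply: eq_bigr => i1 _.
rewrite -big_split; apply: eq_bigr => j1 _.
rewrite -big_split; apply: eq_bigr => k1 _.
by rewrite mulrDl.
Qed.

Lemma mul3_mono c e1 e2 e3 h i j k :
  mul3 (mono3 c e1 e2 e3) h i j k =
  if (e1 <= i)%N then if (e2 <= j)%N then if (e3 <= k)%N then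
     c * h (i - e1)%N (j - e2)%N (k - e3)%N else 0 else 0 else 0.
Proof.
rewrite /mul3.
rewrite (eq_bigr (fun i1 : 'I_i.+1 => if (i1 : nat) == e1 then
   (if (e2 < j.+1)%N then (if (e3 < k.+1)%N then c * h (i - i1)%N (j - e2)%N (k - e3)%N
      else 0) else 0) else 0)); last first.
  move=> i1 _; rewrite /mono3; case: eqP => [ei|ei]; last first.
    by rewrite big1 // => j1 _; rewrite big1 // => k1 _; rewrite /= mul0r.
  rewrite (eq_bigr (fun j1 : 'I_j.+1 => if (j1 : nat) == e2 then
     (if (e3 < k.+1)%N then c * h (i - i1)%N (j - j1)%N (k - e3)%N else 0) else 0)).
    by rewrite (sum_if_int j.+1 e2 (fun j1 => (if (e3 < k.+1)%N then c * h (i - i1)%N (j - j1)%N (k - e3)%N else 0))).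
  move=> j1 _; case: eqP => [ej|ej]; last first.
    by rewrite big1 // => k1 _; rewrite /= mul0r.
  rewrite (eq_bigr (fun k1 : 'I_k.+1 => if (k1 : nat) == e3 then
     c * h (i - i1)%N (j - j1)%N (k - k1)%N else 0)).
    by rewrite (sum_if_int k.+1 e3 (fun k1 => c * h (i - i1)%N (j - j1)%N (k - k1)%N)).
  by move=> k1 _ /=; case: eqP => _; rewrite ?mul1r ?mul0r.
rewrite (sum_if_int i.+1 e1 (fun i1 => (if (e2 < j.+1)%N then (if (e3 < k.+1)%N then c * h (i - i1)%N (j - e2)%N (k - e3)%N
      else 0) else 0))).
by rewrite !ltnS.
Qed.

Lemma mul1_addl f1 f2 h n : mul1 (add1 f1 f2) h n = mul1 f1 h n + mul1 f2 h n.
Proof.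
rewrite /mul1 /add1 -big_split; apply: eq_bigr => i1 _.
by rewrite mulrDl.
Qed.

Lemma mul1_mono c e h n :
  mul1 (mono1 c e) h n = if (e <= n)%N then c * h (n - e)%N else 0.
Proof.
rewrite /mul1 (eq_bigr (fun i1 : 'I_n.+1 => if (i1 : nat) == e then c * h (n - i1)%N else 0)).
  by rewrite (sum_if_int n.+1 e (fun i1 => c * h (n - i1)%N)) ltnS.
by move=> i1 _; rewrite /mono1; case: eqP => _; rewrite ?mul0r.
Qed.

Local Close Scope ring_scope.
Local Open Scope ring_scope.

Lemma gen3_g d a b i j k :
  gen3 d a b i j k = if k.+1 == (i + j)%N then (g d a b i j)%:Z else 0.
Proof.
rewrite /gen3; case: i => [|i]; first by rewrite g0l; case: ifP.
case: j => [|l]; first by rewrite g0r andbF; case: ifP.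
case: k => [|k].
  have -> : (1 == (i.+1 + l.+1)%N) = false by lia.
  by [].
by rewrite ell3_g //=; case: ifP.
Qed.

Lemma gshift d a b (c : int) e1 e2 e3 i j k : e3 = (e1 + e2)%N ->
  (if (e1 <= i)%N then if (e2 <= j)%N then if (e3 <= k)%N then
     c * gen3 d a b (i - e1)%N (j - e2)%N (k - e3)%N else 0 else 0 else 0)
  = if k.+1 == (i + j)%N then c * (g d a b (i - e1) (j - e2))%:Z else 0.
Proof.
move=> ->.
case: (leqP e1 i) => h1; [case: (leqP e2 j) => h2; [case: (leqP (e1 + e2) k) => h3|]|].
- rewrite gen3_g.
  have -> : ((k - (e1 + e2)).+1 == (i - e1 + (j - e2))%N) = (k.+1 == (i + j)%N).
    by apply/eqP/eqP; lia.
  by case: ifP => _; rewrite ?mulr0.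
- case: eqP => // E.
  have -> : (i - e1 = 0)%N by lia.
  by rewrite g0l mulr0.
- case: eqP => // E.
  have -> : (j - e2 = 0)%N by lia.
  by rewrite g0r mulr0.
- case: eqP => // E.
  have -> : (i - e1 = 0)%N by lia.
  by rewrite g0l mulr0.
Qed.

Lemma triv d a b i j k : (2 <= d)%N -> (0 < a)%N -> (a < b)%N -> (b <= d)%N ->
  mul3 (den3 d) (gen3 d a b) i j k = num3 a b i j k.
Proof.
move=> hd ha hab hbd.
rewrite /den3 !mul3_addl !mul3_mono.
rewrite (@gshift _ _ _ _ 0 0 0) // (@gshift _ _ _ _ 0 1 1) //
  (@gshift _ _ _ _ 0 2 2) // (@gshift _ _ _ _ d 0 d) ?addn0 // !subn0.
rewrite /num3 /add3 /mono3.
case E: (k.+1 == (i + j)%N).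
  have H := biv i j hd ha hab hbd.
  have e1 : [&& i == a, j == 1%N & k == a] = (i == a) && (j == 1%N).
    apply/and3P/andP => [[-> ->]//|[/eqP ei /eqP ej]].
    by split; apply/eqP => //; move/eqP: E; lia.
  have e2 : [&& i == a, j == 2%N & k == a.+1] = (i == a) && (j == 2%N).
    apply/and3P/andP => [[-> ->]//|[/eqP ei /eqP ej]].
    by split; apply/eqP => //; move/eqP: E; lia.
  have e3 : [&& i == b, j == 1%N & k == b] = (i == b) && (j == 1%N).
    apply/and3P/andP => [[-> ->]//|[/eqP ei /eqP ej]].
    by split; apply/eqP => //; move/eqP: E; lia.
  rewrite e1 e2 e3; move: H.
  case: ((i == a) && (j == 1%N)); case: ((i == a) && (j == 2%N)); case: ((i == b) && (j == 1%N)) => /= H; lia.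
have f1 : [&& i == a, j == 1%N & k == a] = false.
  by apply/negbTE/and3P => -[/eqP h1 /eqP h2 /eqP h3]; move: E; rewrite h1 h2 h3; lia.
have f2 : [&& i == a, j == 2%N & k == a.+1] = false.
  by apply/negbTE/and3P => -[/eqP h1 /eqP h2 /eqP h3]; move: E; rewrite h1 h2 h3; lia.
have f3 : [&& i == b, j == 1%N & k == b] = false.
  by apply/negbTE/and3P => -[/eqP h1 /eqP h2 /eqP h3]; move: E; rewrite h1 h2 h3; lia.
by rewrite f1 f2 f3 !addr0.
Qed.

Local Close Scope ring_scope.

Definition h d a b (s : nat) : nat := \sum_(i < s.+1) g d a b i (s - i).

Lemma h0 d a b : h d a b 0 = 0.
Proof. by rewrite /h big_ord_recr big_ord0 /= g0l. Qed.

Lemma gen1_h d a b n : gen1 d a b n = Posz (h d a b n.+1).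
Proof.
rewrite /gen1; case: n => [|n].
  by rewrite /h big_ord_recr big_ord_recr big_ord0 /= g0l g0r.
rewrite /= ell_sum //; congr Posz.
rewrite /h [RHS]big_ord_recl [RHS]big_ord_recr /=.
have -> : (n.+2 - bump 0 n.+1 = 0)%N by rewrite /bump; lia.
rewrite g0r addn0.
rewrite -(big_mkord xpredT (fun l => g d a b (n.+1 - l) l.+1)) big_nat_rev big_mkord.
apply: eq_bigr => l _; have hl := ltn_ord l.
rewrite /bump /=; congr g; lia.
Qed.

Lemma hk d a b s k : \sum_(i < s.+1) g d a b i (s - i - k) = h d a b (s - k).
Proof.
case: (leqP k s) => hks.
  have -> : s.+1 = ((s - k).+1 + k)%N by lia.
  rewrite big_split_ord /= [X in (_ + X)%N]big1 ?addn0.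
    by apply: eq_bigr => i _ /=; congr g; lia.
  move=> i _ /=; have -> : (s - ((s - k).+1 + i) - k = 0)%N by lia.
  by rewrite g0r.
have -> : (s - k = 0)%N by lia.
rewrite h0 big1 // => i _.
have -> : (s - i - k = 0)%N by lia.
by rewrite g0r.
Qed.

Lemma hdsum d a b s : \sum_(i < s.+1) g d a b (i - d) (s - i) = h d a b (s - d).
Proof.
case: (leqP d s) => hds.
  have -> : s.+1 = (d + (s - d).+1)%N by lia.
  rewrite big_split_ord /= big1 ?add0n.
    by apply: eq_bigr => i _ /=; congr g; lia.
  move=> i _ /=; have hi := ltn_ord i.
  have -> : (i - d = 0)%N by lia.
  by rewrite g0l.
have -> : (s - d = 0)%N by lia.
rewrite h0 big1 // => i _; have hi := ltn_ord i.
have -> : (i - d = 0)%N by lia.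
by rewrite g0l.
Qed.

Lemma hind (s e c : nat) : 0 < c ->
  \sum_(i < s.+1) (((i : nat) == e) && (s - i == c) : nat) = (e + c == s : nat).
Proof.
move=> hc.
rewrite (eq_bigr (fun i : 'I_s.+1 => if (i : nat) == e then ((s - e == c) : nat) else 0)); last first.
  by move=> i _; case: eqP => [e'|//]; rewrite e'.
rewrite -big_mkcond (big_ord1_eq _ (fun _ => ((s - e == c) : nat)) e s.+1).
case: ifP => he; first by lia.
lia.
Qed.

Lemma univ_nat d a b s : 2 <= d -> 0 < a -> a < b -> b <= d ->
  h d a b s + h d a b (s - 2) + (a + 2 == s : nat)
  = 2 * h d a b (s - 1) + h d a b (s - d) + (a + 1 == s : nat) + (b + 1 == s : nat).
Proof.
move=> hd ha hab hbd.
have E : \sum_(i < s.+1) (g d a b i (s - i) + g d a b i (s - i - 2)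
   + (((i:nat) == a) && (s - i == 2) : nat))
  = \sum_(i < s.+1) (2 * g d a b i (s - i - 1) + g d a b (i - d) (s - i) +
   (((i:nat) == a) && (s - i == 1) : nat) + (((i:nat) == b) && (s - i == 1) : nat)).
  by apply: eq_bigr => i _; exact: biv.
have z : \sum_(i < s.+1) 0 = 0 by rewrite big1.
rewrite !big_split /= !hk hdsum !hind // z -/(h d a b s) in E.
lia.
Qed.
Local Open Scope ring_scope.

Lemma hshift d a b (c : int) e n :
  (if (e <= n)%N then c * gen1 d a b (n - e)%N else 0) = c * Posz (h d a b (n.+1 - e)).
Proof.
case: leqP => he.
  by rewrite gen1_h; have -> : (n.+1 - e = (n - e).+1)%N by lia.
have -> : (n.+1 - e = 0)%N by lia.
by rewrite h0 mulr0.
Qed.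

Lemma univ d a b n : (2 <= d)%N -> (0 < a)%N -> (a < b)%N -> (b <= d)%N ->
  mul1 (den1 d) (gen1 d a b) n = num1 a b n.
Proof.
move=> hd ha hab hbd.
rewrite /den1 !mul1_addl !mul1_mono !hshift subn0 /num1 /add1 /mono1.
have H := univ_nat n.+1 hd ha hab hbd.
have -> : (n == a) = (a + 1 == n.+1)%N by apply/eqP/eqP; lia.
have -> : (n == a.+1) = (a + 2 == n.+1)%N by apply/eqP/eqP; lia.
have -> : (n == b) = (b + 1 == n.+1)%N by apply/eqP/eqP; lia.
move: H.
case: (a + 1 == n.+1)%N; case: (a + 2 == n.+1)%N; case: (b + 1 == n.+1)%N => /= H; rewrite gen1_h; lia.
Qed.

Local Close Scope ring_scope.

Theorem mainTheorem8 (d a b : nat) (hd : 2 <= d) (ha : 0 < a) (hab : a < b)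
    (hbd : b <= d) :
  mul3 (den3 d) (gen3 d a b) = num3 a b /\
  mul1 (den1 d) (gen1 d a b) = num1 a b.
Proof.
split.
  apply: functional_extensionality => i.
  apply: functional_extensionality => j.
  apply: functional_extensionality => k.
  exact: triv.
apply: functional_extensionality => n.
exact: univ.
Qed.
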